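(* Let $p,q\ge 0$ be integers and let $\lambda=(p+1,1^{q})$ be the hook partition (first row of length $p+1$, followed by $q$ rows of length $1$). Let $z_{-q},\dots,z_{-1},z_0,z_1,\dots,z_p\in\mathbb{C}$ with $\Re(z_k)\ge 1$ for all $-q\le k\le p$, $\Re(z_p)>1$ and $\Re(z_{-q})>1$, and let ${\pmb s}\in T(\lambda,\mathbb{C})$ be the content-parametrized tableau with first row $z_0,z_1,\dots,z_p$ and first column $z_0,z_{-1},\dots,z_{-q}$ (i.e. $s_{1,j}=z_{j-1}$ for $1\le j\le p+1$ and $s_{i,1}=z_{-(i-1)}$ for $1\le i\le q+1$). Then $$\zeta_{\lambda}({\pmb s})=\sum_{j=0}^{q}(-1)^j\,\zeta^{\star}(z_{-j},\ldots,z_{-1},z_0,z_1,\ldots,z_p)\,\zeta(z_{-j-1},\ldots,z_{-q}),$$ where $\zeta(z_{-j-1},\ldots,z_{-q})$ is interpreted as $1$ when $j=q$.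
   Context: Euler–Zagier multiple zeta-function and its star variant: $\zeta(s_1,\ldots,s_r)=\sum_{0<m_1<\cdots<m_r}m_1^{-s_1}\cdots m_r^{-s_r}$ and $\zeta^{\star}(s_1,\ldots,s_r)=\sum_{0<m_1\le\cdots\le m_r}m_1^{-s_1}\cdots m_r^{-s_r}$. For a partition $\lambda$, $T(\lambda,X)$ denotes the set of fillings of the Young diagram of $\lambda$ by elements of $X$ (entry in row $i$, column $j$ denoted by the $(i,j)$ entry), and $\mathrm{SSYT}(\lambda)$ is the set of semi-standard Young tableaux $M=(m_{ij})\in T(\lambda,\mathbb{N})$, i.e. $m_{i1}\le m_{i2}\le\cdots$ along each row and $m_{1j}<m_{2j}<\cdots$ down each column. For ${\pmb s}=(s_{ij})\in T(\lambda,\mathbb{C})$ the Schur multiple zeta-function is $\zeta_\lambda({\pmb s})=\sum_{M\in\mathrm{SSYT}(\lambda)}\prod_{(i,j)\in\lambda}m_{ij}^{-s_{ij}}$ (absolutely convergent when $\Re(s_{ij})\ge1$ for all boxes and $\Re(s_{ij})>1$ at the corners of $\lambda$). The content of box $(i,j)$ is $j-i$; ''content-parametrized'' means $s_{ij}=z_{j-i}$. *)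

(* Defs.v *)
From HB Require Import structures.
From mathcomp Require Import all_boot all_order all_algebra.
From mathcomp Require Import all_classical all_reals all_analysis.
From mathcomp Require Export complex.
Set Implicit Arguments.
Unset Strict Implicit.
Unset Printing Implicit Defensive.
Import Order.TTheory GRing.Theory Num.Theory.
Local Open Scope ring_scope.
Local Open Scope classical_set_scope.
Local Open Scope complex_scope.

Section Defs.
Variable R : realType.
Notation C := R[i].

(* n^{-s} for a positive integer n and complex s (principal branch,
   n^{-s} = exp(-s log n) with real log n). *)
Definition npow_neg (n : nat) (s : C) : C :=
  let L := ln (n%:R : R) in
  (expR (- complex.Re s * L) * cos (complex.Im s * L))
    +i* (- (expR (- complex.Re s * L) * sin (complex.Im s * L))).

Definition clim (u : nat -> C) : C :=
  limn (fun N => complex.Re (u N) : R^o) +i* limn (fun N => complex.Im (u N) : R^o).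

Definition mzeta_trunc (s : seq C) (N : nat) : C :=
  \sum_(m : {ffun 'I_(size s) -> 'I_N.+1} |
         [forall i, (0 < (m i : nat))%N] &&
         [forall i : 'I_(size s), forall j : 'I_(size s), ((i : nat) < j)%N ==> ((m i : nat) < m j)%N])
    \prod_(i < size s) npow_neg (m i) (nth 0 s i).

Definition mzetastar_trunc (s : seq C) (N : nat) : C :=
  \sum_(m : {ffun 'I_(size s) -> 'I_N.+1} |
         [forall i, (0 < (m i : nat))%N] &&
         [forall i : 'I_(size s), forall j : 'I_(size s), ((i : nat) < j)%N ==> ((m i : nat) <= m j)%N])
    \prod_(i < size s) npow_neg (m i) (nth 0 s i).

(* zeta(s_1,...,s_r) and zeta^star(s_1,...,s_r), as limits of truncations
   (the series are absolutely convergent in the region considered). *)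
Definition mzeta (s : seq C) : C := clim (mzeta_trunc s).
Definition mzetastar (s : seq C) : C := clim (mzetastar_trunc s).

(* Young diagram of a partition lam = [:: lam_1; lam_2; ...]; boxes are
   (i, j) with 0-based row i and column j (the paper's (i+1, j+1)). *)
Definition inbox (lam : seq nat) (i j : nat) : bool :=
  (i < size lam)%N && (j < nth 0 lam i)%N.

Definition box (lam : seq nat) := ('I_(size lam) * 'I_(nth 0 lam 0))%type.

(* Fillings with entries in {1..N} (encoded with value 0 outside the
   diagram) that are semi-standard Young tableaux. *)
Definition ssyt_trunc (lam : seq nat) (N : nat)
    (M : {ffun box lam -> 'I_N.+1}) : bool :=
  [forall b : box lam,
     if inbox lam b.1 b.2 then (0 < (M b : nat))%N else (M b : nat) == 0%N]
  && [forall b : box lam, forall b' : box lam,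
       [&& inbox lam b.1 b.2, inbox lam b'.1 b'.2,
           (b.1 : nat) == b'.1 & (b.2 < b'.2)%N] ==> ((M b : nat) <= M b')%N]
  && [forall b : box lam, forall b' : box lam,
       [&& inbox lam b.1 b.2, inbox lam b'.1 b'.2,
           (b.2 : nat) == b'.2 & (b.1 < b'.1)%N] ==> ((M b : nat) < M b')%N].

Definition schur_zeta_trunc (lam : seq nat) (s : nat -> nat -> C) (N : nat) : C :=
  \sum_(M : {ffun box lam -> 'I_N.+1} | ssyt_trunc M)
    \prod_(b : box lam | inbox lam b.1 b.2) npow_neg (M b) (s b.1 b.2).

Definition schur_zeta (lam : seq nat) (s : nat -> nat -> C) : C :=
  clim (schur_zeta_trunc lam s).

Definition hook (p q : nat) : seq nat := p.+1 :: nseq q 1%N.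

End Defs.

(* Main.v *)
Require Import Defs.
From HB Require Import structures.
From mathcomp Require Import all_boot all_order all_algebra.
From mathcomp Require Import all_classical all_reals all_analysis.
From mathcomp Require Import complex.
From mathcomp Require Import ring lra zify.
Import Order.TTheory GRing.Theory Num.Theory.
Import numFieldNormedType.Exports.
Set Implicit Arguments.
Unset Strict Implicit.
Unset Printing Implicit Defensive.
Local Open Scope ring_scope.
Local Open Scope complex_scope.
Section A1.
Variable R : realType.
Local Notation C := R[i].

Definition wgt (a : R) (n : nat) : R := expR (- a * ln (n%:R : R)).

Lemma wgt_ge0 a n : 0 <= wgt a n.
Proof. exact: expR_ge0. Qed.

Lemma wgt_gt0 a n : 0 < wgt a n.
Proof. exact: expR_gt0. Qed.

Lemma wgt1 a : wgt a 1 = 1.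
Proof. by rewrite /wgt ln1 mulr0 expR0. Qed.

Lemma wgt_tele (d : R) (n : nat) : 0 < d -> (0 < n)%N ->
  d * wgt (1 + d) n.+1 <= wgt d n - wgt d n.+1.
Proof.
move=> d0 n0.
have n0R : (0 : R) < n%:R by rewrite ltr0n.
have n1R : (0 : R) < n.+1%:R by rewrite ltr0n.
have hl : 1 / n.+1%:R <= ln (n.+1%:R : R) - ln n%:R.
  have -> : ln (n%:R : R) = ln (1 + (- (1 / n.+1%:R))) + ln n.+1%:R.
    rewrite -lnM ?posrE; last 2 first.
    - by rewrite subr_gt0 ltr_pdivrMr // mul1r ltr1n.
    - by [].
    by congr ln; rewrite mulrBl mul1r mulVf ?gt_eqF // -natr1 mul1r addrK.
  have h : ln (1 + (- (1 / n.+1%:R))) <= - (1/n.+1%:R) :> R.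
    apply: le_ln1Dx; rewrite ltrN2 ltr_pdivrMr // mul1r ltr1n ltnS //.
  by rewrite opprD addrCA subrr addr0 lerNr.
have e1 : wgt d n = wgt d n.+1 * expR (d * (ln (n.+1%:R : R) - ln n%:R)).
  by rewrite /wgt -expRD; congr expR; rewrite mulrBr; ring.
have e2 : wgt (1 + d) n.+1 = wgt d n.+1 * (1 / n.+1%:R).
  rewrite /wgt [in RHS]div1r -[X in _ * X^-1]lnK ?posrE // -expRN -expRD.
  by congr expR; ring.
rewrite e1 e2 -{3}[wgt d n.+1]mulr1 -mulrBr mulrCA ler_wpM2l ?wgt_ge0 //.
apply: (@le_trans _ _ (d * (ln (n.+1%:R : R) - ln n%:R))).
  by rewrite ler_wpM2l // ltW.
have := expR_ge1Dx (d * (ln (n.+1%:R : R) - ln n%:R)); lra.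
Qed.

Lemma wgt_sum_bound (d : R) (N : nat) : 0 < d ->
  \sum_(k < N.+1) (if k == 0%N :> nat then 0 else wgt (1 + d) k) <= 1 + d^-1.
Proof.
move=> d0.
suff H : forall N, (0 < N)%N ->
  \sum_(k < N.+1) (if k == 0%N :> nat then 0 else wgt (1 + d) k) <= 1 + d^-1 - d^-1 * wgt d N.
  case: N => [|N]; first by rewrite big_ord_recr big_ord0 /= add0r addr_ge0 // ?invr_ge0 ltW.
  apply: le_trans (H N.+1 isT) _; rewrite lerBlDr lerDl mulr_ge0 ?wgt_ge0 ?invr_ge0 //; exact: ltW.
clear N; elim=> [//|[|N] IH] _.
  by rewrite !big_ord_recr big_ord0 /= !add0r !wgt1 mulr1 addrK.
rewrite big_ord_recr /= (le_trans (lerD (IH isT) (lexx _))) //.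
rewrite -addrA lerD2l.
have := @wgt_tele d N.+1 d0 isT => h.
have h' : wgt (1 + d) N.+2 <= d^-1 * wgt d N.+1 - d^-1 * wgt d N.+2.
  by rewrite -mulrBr -(ler_pM2l d0) mulrA mulfV ?gt_eqF // mul1r.
lra.
Qed.

End A1.
Lemma big_reindex_gen (T : Type) (idx : T) (op : Monoid.com_law idx)
  (X Y : finType) (P : pred X) (Q : pred Y) (h : X -> Y) (h' : Y -> X)
  (F : Y -> T) (G : X -> T) :
  (forall y, Q y -> h (h' y) = y) -> (forall x, h' (h x) = x) ->
  (forall x, Q (h x) = P x) -> (forall x, P x -> F (h x) = G x) ->
  \big[op/idx]_(y | Q y) F y = \big[op/idx]_(x | P x) G x.
Proof.
move=> hh' h'h QP FG.
rewrite (reindex_onto h h' hh'); apply: eq_big => [x|x]; first by rewrite h'h eqxx QP andbT.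
by rewrite QP => /andP[/FG].
Qed.

Definition Sg (V : nmodType) (r N : nat) (P : ('I_r -> nat) -> bool)
  (F : ('I_r -> nat) -> V) : V :=
  \sum_(m : {ffun 'I_r -> 'I_N.+1} | P (fun i => nat_of_ord (m i)))
     F (fun i => nat_of_ord (m i)).

Lemma Sg_widen (V : nmodType) r N N' P (F : ('I_r -> nat) -> V) : (N <= N')%N ->
  Sg N P F = \sum_(m : {ffun 'I_r -> 'I_N'.+1} |
                   P (fun i => nat_of_ord (m i)) && [forall i, (m i <= N)%N])
               F (fun i => nat_of_ord (m i)).
Proof.
move=> NN'.
have le1 : (N.+1 <= N'.+1)%N by [].
symmetry; apply: (@big_reindex_gen _ _ _ _ _ _ _ (fun m : {ffun 'I_r -> 'I_N.+1} =>
                     [ffun i => widen_ord le1 (m i)])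
                   (fun m : {ffun 'I_r -> 'I_N'.+1} => [ffun i => inord (m i)])).
- move=> y /andP[_ /forallP yb]; apply/ffunP => i; rewrite !ffunE; apply: val_inj => /=.
  by rewrite inordK // ltnS yb.
- by move=> x; apply/ffunP => i; rewrite !ffunE; apply: val_inj => /=; rewrite inordK ?ltn_ord.
- move=> x; have -> : (fun i => nat_of_ord ([ffun i => widen_ord le1 (x i)] i)) =
                      (fun i => nat_of_ord (x i)).
    by apply: boolp.funext => i; rewrite ffunE.
  have -> : [forall i, ([ffun i => widen_ord le1 (x i)] i <= N)%N] = true.
    by apply/forallP => i; rewrite ffunE /= -ltnS.
  by rewrite andbT.
- move=> x _; congr F; by apply: boolp.funext => i; rewrite ffunE.
Qed.

Lemma Sg_diff (V : zmodType) r N N' P (F : ('I_r -> nat) -> V) : (N <= N')%N ->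
  Sg N' P F - Sg N P F = \sum_(m : {ffun 'I_r -> 'I_N'.+1} |
                   P (fun i => nat_of_ord (m i)) && ~~ [forall i, (m i <= N)%N])
               F (fun i => nat_of_ord (m i)).
Proof.
move=> NN'; rewrite (Sg_widen _ _ NN') /Sg (bigID (fun m : {ffun 'I_r -> 'I_N'.+1} =>
   [forall i, (m i <= N)%N])) /=.
by rewrite addrAC subrr add0r.
Qed.

Section A2.
Variable R : realType.
Local Notation C := R[i].

Lemma cvg_dom (u t : R^nat) (B : R) :
  (forall N N', (N <= N')%N -> `|u N' - u N| <= t N' - t N) ->
  (forall N, t N <= B) -> cvgn u.
Proof.
move=> hd hB.
have tnd : forall N N', (N <= N')%N -> t N <= t N'.
  by move=> N N' /hd h; rewrite -subr_ge0 (le_trans _ h).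
have ct : cvgn t.
  apply: nondecreasing_is_cvgn; first by move=> m n; apply: tnd.
  by exists B => _ [n _ <-].
have cv : cvgn (u + t).
  apply: nondecreasing_is_cvgn.
    move=> m n mn /=; have := hd _ _ mn; have := tnd _ _ mn.
    rewrite ler_norml => _ /andP[h _]; change (u m + t m <= u n + t n); lra.
  exists (u 0%N - t 0%N + 2 * B) => _ [n _ <-]; change (u n + t n <= u 0%N - t 0%N + 2 * B).
  have := hd _ _ (leq0n n); rewrite ler_norml => /andP[_ h].
  have := hB n; have := hB 0%N; have := tnd _ _ (leq0n n); lra.
have -> : u = (u + t) - t by apply: boolp.funext => n /=; rewrite addrK.
exact: is_cvgB.
Qed.

End A2.
Section A3.
Variable R : realType.
Local Notation C := R[i].

Lemma normc_npow n (s : C) : Normc.normc (npow_neg n s) = wgt (complex.Re s) n.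
Proof.
rewrite /Normc.normc /npow_neg /wgt sqrrN !exprMn -mulrDr cos2Dsin2 mulr1.
by rewrite sqrtr_sqr ger0_norm // expR_ge0.
Qed.

Lemma normc_prod r (F : 'I_r -> C) :
  Normc.normc (\prod_(i < r) F i) = \prod_(i < r) Normc.normc (F i).
Proof. exact: (big_morph _ (@Normc.normcM R) (@Normc.normc1 R)). Qed.

Lemma Re_le_normc (w : C) : `|complex.Re w| <= Normc.normc w.
Proof.
case: w => a b /=; rewrite -sqrtr_sqr; apply: ler_wsqrtr.
by rewrite lerDl sqr_ge0.
Qed.

Lemma Im_le_normc (w : C) : `|complex.Im w| <= Normc.normc w.
Proof.
case: w => a b /=; rewrite -sqrtr_sqr; apply: ler_wsqrtr.
by rewrite lerDr sqr_ge0.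
Qed.

Lemma ReD (x y : C) : complex.Re (x + y) = complex.Re x + complex.Re y.
Proof. by case: x; case: y. Qed.
Lemma ImD (x y : C) : complex.Im (x + y) = complex.Im x + complex.Im y.
Proof. by case: x; case: y. Qed.
Lemma ReB (x y : C) : complex.Re (x - y) = complex.Re x - complex.Re y.
Proof. by case: x; case: y. Qed.
Lemma ImB (x y : C) : complex.Im (x - y) = complex.Im x - complex.Im y.
Proof. by case: x; case: y. Qed.
Lemma Re0 : complex.Re (0 : C) = 0. Proof. by []. Qed.
Lemma Im0 : complex.Im (0 : C) = 0. Proof. by []. Qed.

Lemma Re_sum I (s : seq I) (Pr : pred I) (F : I -> C) :
  complex.Re (\sum_(i <- s | Pr i) F i) = \sum_(i <- s | Pr i) complex.Re (F i).
Proof. exact: (big_morph _ ReD Re0). Qed.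
Lemma Im_sum I (s : seq I) (Pr : pred I) (F : I -> C) :
  complex.Im (\sum_(i <- s | Pr i) F i) = \sum_(i <- s | Pr i) complex.Im (F i).
Proof. exact: (big_morph _ ImD Im0). Qed.

Variables (r : nat) (P : ('I_r -> nat) -> bool) (sv : nat -> C).
Hypothesis r0 : (0 < r)%N.
Hypothesis hP : forall f, P f ->
  (forall i, 0 < f i)%N /\ (forall i j : 'I_r, (i < j)%N -> (f i <= f j)%N).
Hypothesis hs1 : forall i, (i < r)%N -> 1 <= complex.Re (sv i).
Hypothesis hsL : 1 < complex.Re (sv r.-1).

Definition Lo : 'I_r := Ordinal (etrans (ltn_predL r) r0).
Definition dl : R := complex.Re (sv r.-1) - 1.
Definition ep : R := dl / (2 * r%:R).
Definition dd (i : 'I_r) : R := if i == Lo then dl / 2 else ep.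

Lemma dl_gt0 : 0 < dl. Proof. by rewrite /dl subr_gt0. Qed.
Lemma ep_gt0 : 0 < ep.
Proof. by rewrite /ep divr_gt0 ?dl_gt0 // mulr_gt0 // ltr0n. Qed.
Lemma dd_gt0 i : 0 < dd i.
Proof. by rewrite /dd; case: ifP => _; [rewrite divr_gt0 ?dl_gt0 | exact: ep_gt0]. Qed.

Lemma pointwise f : P f ->
  \prod_(i < r) wgt (complex.Re (sv i)) (f i) <= \prod_(i < r) wgt (1 + dd i) (f i).
Proof.
move=> /hP [fpos fch].
set M := f Lo.
have fM : forall i, (f i <= M)%N.
  move=> i; have [/eqP->//|ne] := boolP (i == Lo); apply: fch.
  have ne' : (nat_of_ord i != r.-1).
    by apply: contra ne => /eqP E; apply/eqP/val_inj.
  have := ltn_ord i; rewrite /Lo /=; move: ne'; lia.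
have lnpos : forall k, (0 < k)%N -> 0 <= ln (k%:R : R).
  by move=> k k0; apply: ln_ge0; rewrite ler1n.
have lnM : forall i, ln (f i)%:R <= ln (M%:R : R).
  move=> i; rewrite ler_ln ?posrE ?ltr0n ?fpos // ler_nat; exact: fM.
have M0 : (0 < M)%N := fpos Lo.
set c := expR (ep * ln (M%:R : R)).
have c1 : 1 <= c.
  rewrite /c -[X in X <= _]expR0 ler_expR; apply: mulr_ge0; [exact: ltW ep_gt0 | exact: lnpos].

rewrite (bigD1 Lo) //= [X in _ <= X](bigD1 Lo) //=.
have step_a : \prod_(i < r | i != Lo) wgt (complex.Re (sv i)) (f i) <=
              \prod_(i < r | i != Lo) (wgt (1 + ep) (f i) * c).
  apply: ler_prod => i _; rewrite wgt_ge0 /= /wgt /c -expRD ler_expR.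
  have s1 := hs1 (ltn_ord i).
  have h1 : ln (f i)%:R <= complex.Re (sv i) * ln ((f i)%:R : R).
    have := lnpos _ (fpos i); nra.
  have h2 : ep * ln (f i)%:R <= ep * ln (M%:R : R) by apply: ler_wpM2l; [exact: ltW ep_gt0 | exact: lnM].
  nra.
have step_b : \prod_(i < r | i != Lo) c <= c ^+ r.
  have -> : c ^+ r = \prod_(i < r) c by rewrite -(big_mkord xpredT (fun _ => c)) prodr_const_nat subn0.
  rewrite [X in _ <= X](bigD1 Lo) //= ler_peMl ?prodr_ge0 // => *; exact: le_trans c1.
have cr : c ^+ r = expR (dl / 2 * ln (M%:R : R)).
  rewrite /c -expRM_natl; congr expR; rewrite /ep.
  move: (ln _) (dl) => L D; have rn0 : (r%:R : R) != 0 by rewrite pnatr_eq0 -lt0n.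
  have -> : D / (2 * r%:R) = D / 2 / r%:R by rewrite invfM mulrA.
  by rewrite mulrA [r%:R * _]mulrC divfK.
have wM : wgt (complex.Re (sv Lo)) M * c ^+ r = wgt (1 + dd Lo) M.
  by rewrite cr /wgt -expRD /dd eqxx; congr expR; rewrite /dl /=; field.
rewrite big_split /= in step_a.
have eqr : \prod_(i < r | i != Lo) wgt (1 + dd i) (f i) = \prod_(i < r | i != Lo) wgt (1 + ep) (f i).
  by apply: eq_bigr => i /negbTE ne; rewrite /dd ne.
rewrite -/M eqr -wM -mulrA ler_wpM2l ?wgt_ge0 // mulrC.
apply: (le_trans step_a); apply: ler_wpM2l => //; apply: prodr_ge0 => *; exact: wgt_ge0.
Qed.

Definition Bd : R := \prod_(i < r) (1 + (dd i)^-1).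

Lemma T_bound N : Sg N P (fun f => \prod_(i < r) wgt (complex.Re (sv i)) (f i)) <= Bd.
Proof.
pose H (i : 'I_r) (k : nat) : R := if k == 0%N then 0 else wgt (1 + dd i) k.
have Hge0 : forall i k, 0 <= H i k by move=> i k; rewrite /H; case: ifP => _ //; exact: wgt_ge0.
apply: (@le_trans _ _ (\sum_(m : {ffun 'I_r -> 'I_N.+1}) \prod_(i < r) H i (m i))).
  rewrite /Sg [X in _ <= X](bigID (fun m : {ffun 'I_r -> 'I_N.+1} => P (fun i => nat_of_ord (m i)))) /=.
  apply: ler_wpDr; first by apply: sumr_ge0 => m _; apply: prodr_ge0 => i _; exact: Hge0.
  apply: ler_sum => m Pm; apply: (le_trans (pointwise Pm)).
  apply: ler_prod => i _; rewrite wgt_ge0 /H.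
  by have [fp _] := hP Pm; have /= := fp i => h; rewrite ifN // -lt0n.
rewrite -(bigA_distr_bigA (fun i (k : 'I_N.+1) => H i k)) /Bd.
apply: ler_prod => i _; rewrite sumr_ge0 //=; exact: wgt_sum_bound (dd_gt0 i).
Qed.

End A3.
Lemma Sg0 (V : nmodType) N P (F : ('I_0 -> nat) -> V) : Sg N P F = Sg 0 P F.
Proof.
rewrite (@Sg_widen V 0 0 N P F (leq0n N)); apply: eq_bigl => m.
rewrite (_ : [forall i : 'I_0, (m i <= 0)%N] = true) ?andbT //; by apply/forallP => -[].
Qed.

Lemma Sg0' (V : nmodType) r N P (F : ('I_r -> nat) -> V) : r = 0%N -> Sg N P F = Sg 0 P F.
Proof. by move=> r0; subst r; exact: Sg0. Qed.

Section A4.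
Variable R : realType.
Local Notation C := R[i].
Variables (r : nat) (P : ('I_r -> nat) -> bool) (sv : nat -> C).
Hypothesis hP : forall f, P f ->
  (forall i, 0 < f i)%N /\ (forall i j : 'I_r, (i < j)%N -> (f i <= f j)%N).
Hypothesis hs1 : forall i, (i < r)%N -> 1 <= complex.Re (sv i).
Hypothesis hsL : (0 < r)%N -> 1 < complex.Re (sv r.-1).

Let S N := Sg N P (fun f => \prod_(i < r) npow_neg (f i) (sv i)).
Let T N := Sg N P (fun f => \prod_(i < r) wgt (complex.Re (sv i)) (f i)).

Lemma T_bnd : exists B, forall N, T N <= B.
Proof.
case: (posnP r) => [r0|r0].
  by exists (T 0%N) => N; rewrite /T (Sg0' _ _ _ r0).
by exists (Bd sv r0) => N; apply: T_bound => //; apply: hsL.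
Qed.

Lemma dom_Re N N' : (N <= N')%N ->
  `|complex.Re (S N') - complex.Re (S N)| <= T N' - T N.
Proof.
move=> NN'; rewrite -ReB /S /T !(Sg_diff _ _ NN') Re_sum.
apply: le_trans (ler_norm_sum _ _ _) _; apply: ler_sum => m _.
apply: le_trans (Re_le_normc _) _; rewrite normc_prod.
by rewrite le_eqVlt; apply/orP; left; apply/eqP/eq_bigr => i _; rewrite normc_npow.
Qed.

Lemma dom_Im N N' : (N <= N')%N ->
  `|complex.Im (S N') - complex.Im (S N)| <= T N' - T N.
Proof.
move=> NN'; rewrite -ImB /S /T !(Sg_diff _ _ NN') Im_sum.
apply: le_trans (ler_norm_sum _ _ _) _; apply: ler_sum => m _.
apply: le_trans (Im_le_normc _) _; rewrite normc_prod.
by rewrite le_eqVlt; apply/orP; left; apply/eqP/eq_bigr => i _; rewrite normc_npow.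
Qed.

Lemma Sg_cvg : cvgn (fun N => complex.Re (S N)) /\ cvgn (fun N => complex.Im (S N)).
Proof.
have [B hB] := T_bnd.
split.
  exact: (@cvg_dom R (fun N => complex.Re (S N)) T B dom_Re hB).
exact: (@cvg_dom R (fun N => complex.Im (S N)) T B dom_Im hB).
Qed.

End A4.

Definition Pstar r (f : 'I_r -> nat) : bool := [forall i, (0 < f i)%N] &&
  [forall i : 'I_r, forall j : 'I_r, ((i : nat) < j)%N ==> (f i <= f j)%N].
Definition Pz r (f : 'I_r -> nat) : bool := [forall i, (0 < f i)%N] &&
  [forall i : 'I_r, forall j : 'I_r, ((i : nat) < j)%N ==> (f i < f j)%N].

Lemma mzetastar_Sg (R : realType) (s : seq R[i]) N : mzetastar_trunc s N =
  Sg N (@Pstar (size s)) (fun f => \prod_(i < size s) npow_neg (f i) (nth 0 s i)).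
Proof. by []. Qed.
Lemma mzeta_Sg (R : realType) (s : seq R[i]) N : mzeta_trunc s N =
  Sg N (@Pz (size s)) (fun f => \prod_(i < size s) npow_neg (f i) (nth 0 s i)).
Proof. by []. Qed.

Lemma Pstar_ok r f : @Pstar r f ->
  (forall i, 0 < f i)%N /\ (forall i j : 'I_r, (i < j)%N -> (f i <= f j)%N).
Proof.
move=> /andP[/forallP h1 /forallP h2]; split => // i j ij.
exact: (implyP (forallP (h2 i) j) ij).
Qed.
Lemma Pz_ok r f : @Pz r f ->
  (forall i, 0 < f i)%N /\ (forall i j : 'I_r, (i < j)%N -> (f i <= f j)%N).
Proof.
move=> /andP[/forallP h1 /forallP h2]; split => // i j ij.
exact: ltnW (implyP (forallP (h2 i) j) ij).
Qed.

Lemma mzs_cvg (R : realType) (s : seq R[i]) :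
  (forall i, (i < size s)%N -> 1 <= complex.Re (nth 0 s i)) ->
  ((0 < size s)%N -> 1 < complex.Re (nth 0 s (size s).-1)) ->
  cvgn (fun N => complex.Re (mzetastar_trunc s N)) /\
  cvgn (fun N => complex.Im (mzetastar_trunc s N)).
Proof.
move=> h1 h2.
exact: (@Sg_cvg R (size s) (@Pstar (size s)) (nth 0 s) (@Pstar_ok _) h1 h2).
Qed.

Lemma mzz_cvg (R : realType) (s : seq R[i]) :
  (forall i, (i < size s)%N -> 1 <= complex.Re (nth 0 s i)) ->
  ((0 < size s)%N -> 1 < complex.Re (nth 0 s (size s).-1)) ->
  cvgn (fun N => complex.Re (mzeta_trunc s N)) /\
  cvgn (fun N => complex.Im (mzeta_trunc s N)).
Proof.
move=> h1 h2.
exact: (@Sg_cvg R (size s) (@Pz (size s)) (nth 0 s) (@Pz_ok _) h1 h2).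
Qed.
Lemma alt_tele (V : pzRingType) (q : nat) (a b : nat -> V) :
  (forall j, (j < q)%N -> a j = b j + b j.+1) -> a q = b q ->
  \sum_(j < q.+1) (-1) ^+ j * a j = b 0%N.
Proof.
elim: q a b => [|q IH] a b hab hq.
  by rewrite big_ord_recl big_ord0 expr0 mul1r addr0 hq.
rewrite big_ord_recl expr0 mul1r.
rewrite (eq_bigr (fun i : 'I_q.+1 => - ((-1) ^+ i * a i.+1))); last first.
  by move=> i _; rewrite /= exprS mulN1r mulNr.
rewrite sumrN (IH (fun j => a j.+1) (fun j => b j.+1)) //; last by move=> j jq; exact: hab.
by rewrite hab // addrK.
Qed.

Section B1.
Variables (R : realType) (p q : nat) (z : int -> R[i]).
Local Notation nn := (q + p).+1.

Definition Wt N (x : {ffun 'I_nn -> 'I_N.+1}) : R[i] :=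
  \prod_(t < nn) npow_neg (x t) (z (t%:Z - q%:Z)).

Definition xv N (x : {ffun 'I_nn -> 'I_N.+1}) (t : nat) : nat := x (inord t).

Definition posb N (x : {ffun 'I_nn -> 'I_N.+1}) := [forall t, (0 < x t)%N].
Definition upb N a (x : {ffun 'I_nn -> 'I_N.+1}) :=
  [forall t : 'I_nn, forall t' : 'I_nn, ((a <= t)%N && (t < t')%N) ==> (x t <= x t')%N].
Definition dnb N a (x : {ffun 'I_nn -> 'I_N.+1}) :=
  [forall t : 'I_nn, forall t' : 'I_nn, ((t < t')%N && (t' <= a)%N) ==> (x t' < x t)%N].
Definition Ab N j (x : {ffun 'I_nn -> 'I_N.+1}) :=
  [&& posb x, upb (q - j) x & dnb (q - j).-1 x].
Definition Bb N j (x : {ffun 'I_nn -> 'I_N.+1}) :=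
  [&& posb x, upb (q - j) x & dnb (q - j) x].

Lemma xv_ord N (x : {ffun 'I_nn -> 'I_N.+1}) (t : 'I_nn) : xv x t = x t.
Proof. by rewrite /xv inord_val. Qed.

Lemma posbP N (x : {ffun 'I_nn -> 'I_N.+1}) :
  reflect (forall t, (t < nn)%N -> (0 < xv x t)%N) (posb x).
Proof.
apply: (iffP forallP) => h t.
  by move=> tn; have := h (inord t); rewrite -xv_ord /xv inordK.
by rewrite -xv_ord; apply: h.
Qed.

Lemma upbP N a (x : {ffun 'I_nn -> 'I_N.+1}) :
  reflect (forall t t', (a <= t)%N -> (t < t')%N -> (t' < nn)%N -> (xv x t <= xv x t')%N)
          (upb a x).
Proof.
apply: (iffP forallP) => h.
  move=> t t' ha tt' t'n; have tn : (t < nn)%N by apply: ltn_trans tt' t'n.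
  have := forallP (h (inord t)) (inord t'); rewrite !inordK //.
  by move/implyP; apply; rewrite ha tt'.
move=> t; apply/forallP => t'; apply/implyP => /andP[ha tt'].
by rewrite -!xv_ord; apply: h.
Qed.

Lemma dnbP N a (x : {ffun 'I_nn -> 'I_N.+1}) :
  reflect (forall t t', (t < t')%N -> (t' <= a)%N -> (t' < nn)%N -> (xv x t' < xv x t)%N)
          (dnb a x).
Proof.
apply: (iffP forallP) => h.
  move=> t t' tt' ta t'n; have tn : (t < nn)%N by apply: ltn_trans tt' t'n.
  have := forallP (h (inord t)) (inord t'); rewrite !inordK //.
  by move/implyP; apply; rewrite ta tt'.
move=> t; apply/forallP => t'; apply/implyP => /andP[tt' ta].
by rewrite -!xv_ord; apply: h.
Qed.

Lemma tele_pred N j (x : {ffun 'I_nn -> 'I_N.+1}) : (j < q)%N ->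
  (Ab j x && (xv x (q - j) < xv x (q - j).-1)%N = Bb j x) /\
  (Ab j x && ~~ (xv x (q - j) < xv x (q - j).-1)%N = Bb j.+1 x).
Proof.
move=> jq.
rewrite /Ab /Bb subnS.
set a := (q - j)%N.
have a0 : (0 < a)%N by rewrite subn_gt0.
have an : (a < nn)%N by rewrite /a ltnS (leq_trans (leq_subr _ _)) // leq_addr.
split.
  apply/idP/idP.
    move=> /andP[/and3P[xp xu /dnbP xd] c]; rewrite xp xu /=.
    apply/dnbP => t t' tt' t'a t'n.
    have [t'a1|] := leqP t' a.-1; first exact: xd.
    move=> a1t'; have t'e : t' = a by move: t'a a1t'; lia.
    subst t'; have [te|tl] := eqVneq t a.-1; first by rewrite te.
    apply: ltn_trans c _; apply: xd => //; [by move: tt' tl; lia | by lia].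
  move=> /and3P[xp xu /dnbP xd]; rewrite xp xu /=.
  rewrite xd //; last by move: a0; lia.
  rewrite andbT; apply/dnbP => t t' tt' t'a t'n; apply: xd => //; move: t'a; lia.
apply/idP/idP.
  move=> /andP[/and3P[xp /upbP xu xd] c]; rewrite xp xd andbT /=.
  rewrite -leqNgt in c.
  apply/upbP => t t' ha tt' t'n.
  have [ha'|] := leqP a t; first exact: xu.
  move=> ta; have te : t = a.-1 by move: ha ta; lia.
  subst t; apply: leq_trans c _; have [->//|ne] := eqVneq t' a.
  by apply: xu => //; move: tt' ne; lia.
move=> /and3P[xp /upbP xu xd]; rewrite xp xd /= andbT -leqNgt.
rewrite xu //; last by move: a0; lia.
rewrite andbT; apply/upbP => t t' ha tt' t'n; apply: xu => //; move: ha; lia.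
Qed.

Lemma tele_sum N j : (j < q)%N ->
  \sum_(x : {ffun 'I_nn -> 'I_N.+1} | Ab j x) Wt x =
  \sum_(x : {ffun 'I_nn -> 'I_N.+1} | Bb j x) Wt x + \sum_(x : {ffun 'I_nn -> 'I_N.+1} | Bb j.+1 x) Wt x.
Proof.
move=> jq; rewrite (bigID (fun x : {ffun 'I_nn -> 'I_N.+1} =>
   (xv x (q - j) < xv x (q - j).-1)%N)) /=.
by congr (_ + _); apply: eq_bigl => x; have [h1 h2] := tele_pred x jq.
Qed.

Lemma AbBbq N (x : {ffun 'I_nn -> 'I_N.+1}) : Ab q x = Bb q x.
Proof. by rewrite /Ab /Bb subnn. Qed.

Lemma alt_sum N :
  \sum_(j < q.+1) (-1) ^+ j * \sum_(x : {ffun 'I_nn -> 'I_N.+1} | Ab j x) Wt x =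
  \sum_(x : {ffun 'I_nn -> 'I_N.+1} | Bb 0 x) Wt x.
Proof.
apply: (alt_tele (a := fun j => \sum_(x : {ffun 'I_nn -> 'I_N.+1} | Ab j x) Wt x)
                 (b := fun j => \sum_(x : {ffun 'I_nn -> 'I_N.+1} | Bb j x) Wt x)).
  by move=> j jq; exact: tele_sum.
by apply: eq_bigl => x; rewrite AbBbq.
Qed.

End B1.
Section B2.
Variables (R : realType) (p q : nat) (z : int -> R[i]).
Local Notation nn := (q + p).+1.
Local Notation lam := (hook p q).
Local Notation bx := (box (hook p q)).

Lemma size_hook : size lam = q.+1.
Proof. by rewrite /= size_nseq. Qed.

Lemma inbox_hook (i j : nat) : inbox lam i j =
  ((i == 0%N) && (j <= p)%N) || [&& (0 < i)%N, (i <= q)%N & j == 0%N].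
Proof.
rewrite /inbox size_hook; case: i => [|i] /=; first by rewrite orbF ltnS.
by rewrite nth_nseq; case: ifP => iq /=; rewrite ?ltnS ?leqn0 ?ltn0 ?andbF ?iq.
Qed.

Definition bof (t : 'I_nn) : bx :=
  if (q <= t)%N then (inord 0, inord (t - q)) else (inord (q - t), inord 0).

Lemma bof1 t : ((bof t).1 : nat) = if (q <= t)%N then 0%N else (q - t)%N.
Proof.
by rewrite /bof; case: ifP => _ /=; rewrite inordK // ?size_nseq ?ltnS ?leq_subr.
Qed.

Lemma bof2 t : ((bof t).2 : nat) = if (q <= t)%N then (t - q)%N else 0%N.
Proof.
rewrite /bof; case: ifP => _ /=; rewrite inordK //.
by rewrite ltnS leq_subLR; have := ltn_ord t; rewrite ltnS.
Qed.

Lemma inbox_bof t : inbox lam (bof t).1 (bof t).2.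
Proof.
by rewrite inbox_hook bof1 bof2; have := ltn_ord t; case: ifP; lia.
Qed.

Lemma idx_bof t : (q + (bof t).2 - (bof t).1)%N = t.
Proof. rewrite bof1 bof2; case: ifP => qt; move: qt; lia. Qed.

Lemma idx_lt (b : bx) : inbox lam b.1 b.2 -> (q + b.2 - b.1 < nn)%N.
Proof. rewrite inbox_hook => /orP[/andP[_ h]|/and3P[_ _ /eqP ->]]; lia. Qed.

Lemma box_eq (b b' : bx) : (b.1 : nat) = b'.1 -> (b.2 : nat) = b'.2 -> b = b'.
Proof. by case: b b' => [a c] [a' c'] /= h1 h2; congr pair; apply: val_inj. Qed.

Lemma bof_idx (b : bx) : inbox lam b.1 b.2 -> bof (inord (q + b.2 - b.1)) = b.
Proof.
move=> ib; have lt := idx_lt ib; move: ib; rewrite inbox_hook => ib.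
apply: box_eq; rewrite ?bof1 ?bof2 inordK //.
  by case/orP: ib => [/andP[/eqP -> _]|/and3P[h1 h2 /eqP ->]];
     case: ifP => h; move: h; lia.
by case/orP: ib => [/andP[/eqP -> _]|/and3P[h1 h2 /eqP ->]];
     case: ifP => h; move: h; lia.
Qed.

Variable N : nat.

Definition hS (x : {ffun 'I_nn -> 'I_N.+1}) : {ffun bx -> 'I_N.+1} :=
  [ffun b : bx => if inbox lam b.1 b.2 then x (inord (q + b.2 - b.1)) else ord0].
Definition hS' (M : {ffun bx -> 'I_N.+1}) : {ffun 'I_nn -> 'I_N.+1} :=
  [ffun t => M (bof t)].

Lemma hS_bof x t : hS x (bof t) = x t.
Proof. by rewrite ffunE inbox_bof idx_bof inord_val. Qed.

Lemma hS_in x (b : bx) : inbox lam b.1 b.2 -> (hS x b : nat) = xv x (q + b.2 - b.1).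
Proof. by move=> ib; rewrite ffunE ib. Qed.

Lemma hS'K x : hS' (hS x) = x.
Proof. by apply/ffunP => t; rewrite ffunE hS_bof. Qed.

Lemma hSK M : ssyt_trunc M -> hS (hS' M) = M.
Proof.
move=> /andP[/andP[/forallP h0 _] _]; apply/ffunP => b; rewrite ffunE.
case: ifP => ib; first by rewrite ffunE bof_idx.
by have := h0 b; rewrite ib => /eqP h; apply: val_inj; rewrite /= h.
Qed.

End B2.
Section B3.
Variables (R : realType) (p q : nat) (z : int -> R[i]).
Local Notation nn := (q + p).+1.
Local Notation lam := (hook p q).
Local Notation bx := (box (hook p q)).
Variable N : nat.

Lemma bof1' (t : 'I_nn) : ((bof t).1 : nat) = (q - t)%N.
Proof. rewrite bof1; case: ifP => h //; move: h; lia. Qed.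
Lemma bof2' (t : 'I_nn) : ((bof t).2 : nat) = (t - q)%N.
Proof. rewrite bof2; case: ifP => h //; move: h; lia. Qed.

Lemma ssyt_hS (x : {ffun 'I_nn -> 'I_N.+1}) : ssyt_trunc (hS x) = Bb 0 x.
Proof.
rewrite /Bb subn0; apply/idP/idP.
  move=> /andP[/andP[/forallP h0 /forallP h1] /forallP h2].
  apply/and3P; split.
  - apply/posbP => t tn; have := h0 (bof (inord t)).
    by rewrite inbox_bof hS_bof.
  - apply/upbP => t t' qt tt' t'n; have tn : (t < nn)%N by lia.
    have := implyP (forallP (h1 (bof (inord t))) (bof (inord t'))).
    rewrite !inbox_bof !hS_bof !bof1' !bof2' !inordK //; apply.
    apply/and3P; split => //; apply/andP; split; lia.
  - apply/dnbP => t t' tt' t'q t'n; have tn : (t < nn)%N by lia.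
    have := implyP (forallP (h2 (bof (inord t'))) (bof (inord t))).
    rewrite !inbox_bof !hS_bof !bof1' !bof2' !inordK //; apply.
    apply/and3P; split => //; apply/andP; split; lia.
move=> /and3P[/posbP xp /upbP xu /dnbP xd].
apply/andP; split; first (apply/andP; split).
- apply/forallP => b; case: ifP => ib.
    rewrite hS_in //; apply: xp; exact: idx_lt.
  by rewrite ffunE ib.
- apply/forallP => b; apply/forallP => b'; apply/implyP => /and4P[ib ib' /eqP e lt].
  rewrite !hS_in //; have := idx_lt ib'; move: ib ib' e lt; rewrite !inbox_hook => ib ib' e lt nb.
  apply: xu; lia.
- apply/forallP => b; apply/forallP => b'; apply/implyP => /and4P[ib ib' /eqP e lt].
  rewrite !hS_in //; have := idx_lt ib; move: ib ib' e lt; rewrite !inbox_hook => ib ib' e lt nb.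
  apply: xd; lia.
Qed.

Lemma weight_hS (x : {ffun 'I_nn -> 'I_N.+1}) :
  \prod_(b : bx | inbox lam b.1 b.2) npow_neg (hS x b) (z ((b.2)%:Z - (b.1)%:Z)) = Wt z x.
Proof.
rewrite /Wt; apply: (@big_reindex_gen _ _ _ _ _ _ _ (@bof p q)
   (fun b : bx => (inord (q + b.2 - b.1) : 'I_nn))).
- by move=> b ib; apply: bof_idx.
- by move=> t; apply: val_inj; rewrite /= idx_bof inordK.
- by move=> t; rewrite inbox_bof.
- move=> t _; rewrite hS_bof; congr (npow_neg _ (z _)).
  rewrite bof1' bof2'; have := ltn_ord t; lia.
Qed.

Lemma schur_eq : schur_zeta_trunc lam (fun i j => z (j%:Z - i%:Z)) N =
  \sum_(x : {ffun 'I_nn -> 'I_N.+1} | Bb 0 x) Wt z x.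
Proof.
rewrite /schur_zeta_trunc.
apply: (@big_reindex_gen _ _ _ _ _ _ _ (@hS p q N) (@hS' p q N)).
- exact: hSK.
- exact: hS'K.
- exact: ssyt_hS.
- by move=> x _; exact: weight_hS.
Qed.

End B3.
Section B4.
Variables (R : realType) (p q : nat) (z : int -> R[i]).
Local Notation nn := (q + p).+1.
Variable N : nat.

Definition getf r (f : {ffun 'I_r -> 'I_N.+1}) (k : nat) : 'I_N.+1 :=
  if insub k is Some i then f i else ord0.

Lemma getf_ord r (f : {ffun 'I_r -> 'I_N.+1}) (i : 'I_r) : getf f i = f i.
Proof. by rewrite /getf valK. Qed.

Lemma getf_lt r (f : {ffun 'I_r -> 'I_N.+1}) k (h : (k < r)%N) : getf f k = f (Ordinal h).
Proof. exact: (getf_ord f (Ordinal h)). Qed.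

Lemma xv_getf (x : {ffun 'I_nn -> 'I_N.+1}) t : (t < nn)%N -> xv x t = getf x t.
Proof.
move=> h; rewrite (getf_lt x h) /xv; congr (nat_of_ord (x _)); apply: val_inj.
by rewrite /= inordK.
Qed.

Lemma PstarP r (f : 'I_r -> nat) (g : nat -> nat) : (forall i : 'I_r, f i = g i) ->
  reflect ((forall k, (k < r)%N -> (0 < g k)%N) /\
           (forall k k', (k < k')%N -> (k' < r)%N -> (g k <= g k')%N)) (Pstar f).
Proof.
move=> fg; apply: (iffP andP) => [[/forallP h1 /forallP h2]|[h1 h2]].
  split; first by move=> k kr; have := h1 (Ordinal kr); rewrite fg.
  move=> k k' kk' k'r; have kr : (k < r)%N by apply: ltn_trans kk' k'r.
  by have := implyP (forallP (h2 (Ordinal kr)) (Ordinal k'r)) kk'; rewrite !fg.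
split; first by apply/forallP => i; rewrite fg; apply: h1.
apply/forallP => i; apply/forallP => i'; apply/implyP => ii'; rewrite !fg; exact: h2.
Qed.

Lemma PzP r (f : 'I_r -> nat) (g : nat -> nat) : (forall i : 'I_r, f i = g i) ->
  reflect ((forall k, (k < r)%N -> (0 < g k)%N) /\
           (forall k k', (k < k')%N -> (k' < r)%N -> (g k < g k')%N)) (Pz f).
Proof.
move=> fg; apply: (iffP andP) => [[/forallP h1 /forallP h2]|[h1 h2]].
  split; first by move=> k kr; have := h1 (Ordinal kr); rewrite fg.
  move=> k k' kk' k'r; have kr : (k < r)%N by apply: ltn_trans kk' k'r.
  by have := implyP (forallP (h2 (Ordinal kr)) (Ordinal k'r)) kk'; rewrite !fg.
split; first by apply/forallP => i; rewrite fg; apply: h1.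
apply/forallP => i; apply/forallP => i'; apply/implyP => ii'; rewrite !fg; exact: h2.
Qed.

Variable j : nat.
Hypothesis jq : (j <= q)%N.
Local Notation l1 := [seq z (k%:Z - j%:Z) | k <- iota 0 (j + p).+1].
Local Notation l2 := [seq z (- ((j.+1 + i)%N)%:Z) | i <- iota 0 (q - j)].
Local Notation a := (q - j)%N.

Lemma size_l1 : size l1 = (j + p).+1. Proof. by rewrite size_map size_iota. Qed.
Lemma size_l2 : size l2 = (q - j)%N. Proof. by rewrite size_map size_iota. Qed.
Lemma nth_l1 k : (k < (j + p).+1)%N -> nth 0 l1 k = z (k%:Z - j%:Z).
Proof. by move=> h; rewrite (nth_map 0%N) ?size_iota // nth_iota. Qed.
Lemma nth_l2 i : (i < q - j)%N -> nth 0 l2 i = z (- ((j.+1 + i)%N)%:Z).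
Proof. by move=> h; rewrite (nth_map 0%N) ?size_iota // nth_iota. Qed.

Local Notation T1 := {ffun 'I_(size l1) -> 'I_N.+1}.
Local Notation T2 := {ffun 'I_(size l2) -> 'I_N.+1}.

Definition hP (x : {ffun 'I_nn -> 'I_N.+1}) : T1 * T2 :=
  ([ffun k : 'I_(size l1) => getf x (a + k)], [ffun i : 'I_(size l2) => getf x (a.-1 - i)]).
Definition hP' (y : T1 * T2) : {ffun 'I_nn -> 'I_N.+1} :=
  [ffun t : 'I_nn => if (a <= t)%N then getf y.1 (t - a) else getf y.2 (a.-1 - t)].

Lemma hP'K x : hP' (hP x) = x.
Proof.
apply/ffunP => t; rewrite ffunE /=; have := ltn_ord t; case: ifP => ht tn.
  have h : (t - a < size l1)%N by rewrite size_l1; lia.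
  by rewrite (getf_lt _ h) ffunE /= subnKC // getf_ord.
have h : (a.-1 - t < size l2)%N by rewrite size_l2; lia.
by rewrite (getf_lt _ h) ffunE /= (_ : (a.-1 - (a.-1 - t))%N = t) ?getf_ord //; lia.
Qed.

Lemma hPK y : hP (hP' y) = y.
Proof.
case: y => y1 y2; congr pair; apply/ffunP => k; rewrite ffunE.
  have kr : (k < (j + p).+1)%N by move: (ltn_ord k); rewrite [X in (_ < X)%N]size_l1.
  have h : (a + k < nn)%N by lia.
  rewrite (getf_lt _ h) ffunE /= ifT; last by lia.
  by rewrite (_ : (a + k - a)%N = k) ?getf_ord //; lia.
have kr : (k < q - j)%N by move: (ltn_ord k); rewrite [X in (_ < X)%N]size_l2.
have h : (a.-1 - k < nn)%N by lia.
rewrite (getf_lt _ h) ffunE /= ifF; last by lia.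
by rewrite (_ : (a.-1 - (a.-1 - k))%N = k) ?getf_ord //; lia.
Qed.

Lemma hP1 x (k : 'I_(size l1)) : ((hP x).1 k : nat) = xv x (a + k).
Proof.
rewrite ffunE xv_getf //; move: (ltn_ord k); rewrite [X in (_ < X)%N]size_l1; lia.
Qed.
Lemma hP2 x (k : 'I_(size l2)) : ((hP x).2 k : nat) = xv x (a.-1 - k).
Proof.
rewrite ffunE xv_getf //; move: (ltn_ord k); rewrite [X in (_ < X)%N]size_l2; lia.
Qed.

Lemma pred_hP x :
  Pstar (fun k => nat_of_ord ((hP x).1 k)) && Pz (fun i => nat_of_ord ((hP x).2 i)) = Ab j x.
Proof.
rewrite /Ab; apply/idP/idP.
  move=> /andP[/(@PstarP _ _ (fun k => xv x (a + k)) (hP1 x))[s1 s2] /(@PzP _ _ (fun k => xv x (a.-1 - k)) (hP2 x))[z1 z2]].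
  rewrite size_l1 in s1 s2; rewrite size_l2 in z1 z2.
  apply/and3P; split.
  - apply/posbP => t tn; have [ht|ht] := leqP a t.
      by have := s1 (t - a)%N; rewrite subnKC //; apply; lia.
    by have := z1 (a.-1 - t)%N; rewrite (_ : (a.-1 - (a.-1 - t))%N = t); [apply; lia|lia].
  - apply/upbP => t t' ht tt' t'n.
    have := s2 (t - a)%N (t' - a)%N; rewrite !subnKC //; [apply; lia | lia].
  - apply/dnbP => t t' tt' t'a t'n.
    have := z2 (a.-1 - t')%N (a.-1 - t)%N.
    rewrite (_ : (a.-1 - (a.-1 - t'))%N = t'); last by lia.
    rewrite (_ : (a.-1 - (a.-1 - t))%N = t); last by lia.
    apply; lia.
move=> /and3P[/posbP xp /upbP xu /dnbP xd].
apply/andP; split.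
  apply/(@PstarP _ _ (fun k => xv x (a + k)) (hP1 x)); rewrite size_l1; split.
    by move=> k kr; apply: xp; lia.
  by move=> k k' kk' k'r; apply: xu; lia.
apply/(@PzP _ _ (fun k => xv x (a.-1 - k)) (hP2 x)); rewrite size_l2; split.
  by move=> k kr; apply: xp; lia.
by move=> k k' kk' k'r; apply: xd; lia.
Qed.

Lemma weight_hP x :
  (\prod_(i < size l1) npow_neg ((hP x).1 i) (nth 0 l1 i)) *
  (\prod_(i < size l2) npow_neg ((hP x).2 i) (nth 0 l2 i)) = Wt z x.
Proof.
set G := fun t : nat => npow_neg (xv x t) (z (t%:Z - q%:Z)).
have -> : Wt z x = \prod_(0 <= t < a) G t * \prod_(a <= t < nn) G t.
  rewrite -(big_cat_nat (n := a) (m := 0) (p := nn)) //; last by lia.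
  rewrite big_mkord; apply: eq_bigr => t _; by rewrite /G xv_ord.
rewrite [LHS]mulrC; congr (_ * _).
  rewrite (eq_bigr (fun i : 'I_(size l2) => npow_neg (xv x (a.-1 - i)) (nth 0 l2 i))); last by move=> i _; rewrite hP2.
  rewrite -(big_mkord xpredT (fun i => npow_neg (xv x (a.-1 - i)) (nth 0 l2 i))) size_l2.
  rewrite [in RHS]big_nat_rev /=; apply: eq_big_nat => i /andP[_ ir].
  rewrite nth_l2 // /G add0n (_ : (a - i.+1)%N = (a.-1 - i)%N); last by lia.
  congr (npow_neg _ (z _)); lia.
rewrite (eq_bigr (fun i : 'I_(size l1) => npow_neg (xv x (a + i)) (nth 0 l1 i))); last by move=> i _; rewrite hP1.
rewrite -(big_mkord xpredT (fun i => npow_neg (xv x (a + i)) (nth 0 l1 i))) size_l1.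
rewrite -[in RHS](add0n a) big_addn (_ : (nn - a)%N = (j + p).+1); last by lia.
apply: eq_big_nat => k /andP[_ kr]; rewrite nth_l1 // /G addnC; congr (npow_neg _ (z _)).
lia.
Qed.

Lemma prod_eq :
  mzetastar_trunc l1 N * mzeta_trunc l2 N = \sum_(x : {ffun 'I_nn -> 'I_N.+1} | Ab j x) Wt z x.
Proof.
rewrite /mzetastar_trunc /mzeta_trunc big_distrlr /= pair_big_dep /=.
apply: (@big_reindex_gen _ _ _ _ _ _ _ hP hP').
- by move=> y _; exact: hPK.
- exact: hP'K.
- exact: pred_hP.
- by move=> x _; exact: weight_hP.
Qed.

End B4.
Section C.
Variable R : realType.
Local Notation C := R[i].
Local Open Scope classical_set_scope.

Definition cto (u : nat -> C) (L : C) :=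
  (fun N => complex.Re (u N)) @ \oo --> complex.Re L /\
  (fun N => complex.Im (u N)) @ \oo --> complex.Im L.

Lemma cto_clim (u : nat -> C) :
  cvgn (fun N => complex.Re (u N)) -> cvgn (fun N => complex.Im (u N)) -> cto u (clim u).
Proof. by move=> h1 h2; split. Qed.

Lemma cto_cst (c : C) : cto (fun _ => c) c.
Proof. by split; apply: cvg_cst. Qed.

Lemma cto_mul u v L M : cto u L -> cto v M -> cto (fun N => u N * v N) (L * M).
Proof.
case: L M => [a b] [c d] [h1 h2] [h3 h4]; split.
  have -> : (fun N => complex.Re (u N * v N)) =
            (fun N => complex.Re (u N) * complex.Re (v N) - complex.Im (u N) * complex.Im (v N)).
    by apply: boolp.funext => N; case: (u N) => ? ?; case: (v N).
  exact: cvgB (cvgM h1 h3) (cvgM h2 h4).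
have -> : (fun N => complex.Im (u N * v N)) =
          (fun N => complex.Re (u N) * complex.Im (v N) + complex.Im (u N) * complex.Re (v N)).
  by apply: boolp.funext => N; case: (u N) => ? ?; case: (v N).
exact: cvgD (cvgM h1 h4) (cvgM h2 h3).
Qed.

Lemma cto_add u v L M : cto u L -> cto v M -> cto (fun N => u N + v N) (L + M).
Proof.
move=> [h1 h2] [h3 h4]; split.
  have -> : (fun N => complex.Re (u N + v N)) =
            (fun N => complex.Re (u N) + complex.Re (v N)).
    by apply: boolp.funext => N; rewrite ReD.
  by rewrite ReD; exact: cvgD h1 h3.
have -> : (fun N => complex.Im (u N + v N)) =
          (fun N => complex.Im (u N) + complex.Im (v N)).
  by apply: boolp.funext => N; rewrite ImD.
by rewrite ImD; exact: cvgD h2 h4.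
Qed.

Lemma cto_sum n (F : 'I_n -> nat -> C) (L : 'I_n -> C) :
  (forall j, cto (F j) (L j)) -> cto (fun N => \sum_(j < n) F j N) (\sum_(j < n) L j).
Proof.
elim: n F L => [|n IH] F L h.
  have -> : (fun N => \sum_(j < 0) F j N) = (fun _ => 0).
    by apply: boolp.funext => N; rewrite big_ord0.
  rewrite big_ord0; exact: cto_cst.
have -> : (fun N => \sum_(j < n.+1) F j N) =
          (fun N => \sum_(j < n) F (widen_ord (leqnSn n) j) N + F ord_max N).
  by apply: boolp.funext => N; rewrite big_ord_recr.
rewrite big_ord_recr; apply: cto_add; last exact: h.
exact: IH.
Qed.

Lemma cto_eq u L : cto u L -> clim u = L.
Proof.
case: L => a b [h1 h2]; rewrite /clim.
congr Complex; apply: cvg_lim; try exact: Rhausdorff; [exact: h1 | exact: h2].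
Qed.

End C.
Theorem theorem3p1 (R : realType) (p q : nat) (z : int -> R[i])
  (hz : forall k : int, - (q%:Z) <= k -> k <= p%:Z -> 1 <= complex.Re (z k))
  (hzp : 1 < complex.Re (z p%:Z))
  (hzq : 1 < complex.Re (z (- (q%:Z)))) :
  schur_zeta (hook p q) (fun i j => z (j%:Z - i%:Z)) =
  \sum_(j < q.+1)
     (-1) ^+ j
     * mzetastar [seq z (k%:Z - j%:Z) | k <- iota 0 (j + p).+1]
     * mzeta [seq z (- ((j.+1 + i)%N)%:Z) | i <- iota 0 (q - j)].
Proof.
have Hs : forall N, schur_zeta_trunc (hook p q) (fun i j => z (j%:Z - i%:Z)) N =
  \sum_(j < q.+1) (-1) ^+ j
     * mzetastar_trunc [seq z (k%:Z - j%:Z) | k <- iota 0 (j + p).+1] N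
     * mzeta_trunc [seq z (- ((j.+1 + i)%N)%:Z) | i <- iota 0 (q - j)] N.
  move=> N; rewrite schur_eq -alt_sum; apply: eq_bigr => j _.
  by rewrite -mulrA prod_eq // -ltnS.
rewrite /schur_zeta (_ : schur_zeta_trunc _ _ = fun N => \sum_(j < q.+1) (-1) ^+ j
     * mzetastar_trunc [seq z (k%:Z - j%:Z) | k <- iota 0 (j + p).+1] N
     * mzeta_trunc [seq z (- ((j.+1 + i)%N)%:Z) | i <- iota 0 (q - j)] N); last first.
  by apply: boolp.funext => N; rewrite Hs.
apply: cto_eq; apply: cto_sum => j.
have jq : (j <= q)%N by rewrite -ltnS.
apply: cto_mul; first apply: cto_mul.
- exact: cto_cst.
- case: (@mzs_cvg R [seq z (k%:Z - j%:Z) | k <- iota 0 (j + p).+1]).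
  + move=> i; rewrite size_l1 => hi; rewrite nth_l1 //; apply: hz; lia.
  + move=> _; rewrite size_l1 /= nth_l1 //.
    by rewrite (_ : ((j + p)%N%:Z - j%:Z) = p%:Z) //; lia.
  + by move=> c1 c2; exact: cto_clim.
- case: (@mzz_cvg R [seq z (- ((j.+1 + i)%N)%:Z) | i <- iota 0 (q - j)]).
  + move=> i; rewrite size_l2 => hi; rewrite nth_l2 //; apply: hz; lia.
  + rewrite size_l2 => hqj; rewrite nth_l2; last by lia.
    by rewrite (_ : (- ((j.+1 + (q - j).-1)%N)%:Z) = - q%:Z) //; lia.
  + by move=> c1 c2; exact: cto_clim.
Qed.
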